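(* Let $H$ be a complex Hilbert space and let $T$ be a densely defined closed linear operator in $H$ with domain $D(T)$ such that $D(T)\subset D(T^* )$. Suppose $T$ is nilpotent, i.e. there is $n\in\mathbb{N}$ such that $T^n$ is well defined with $D(T^n)=D(T)$ and $T^n x=0$ for all $x\in D(T)$. Then $T\in B(H)$ (i.e. $D(T)=H$ and $T$ is bounded). In particular, if $T$ is a closed densely defined nilpotent operator which is symmetric or hyponormal, then $T=0$ everywhere on $H$.
   Context: Products of unbounded operators are taken on natural domains: $D(ST)=\{x\in D(T): Tx\in D(S)\}$, and $T^n$ is defined accordingly. Nilpotence of $T$ means $D(T^n)=D(T^{n-1})=\dots=D(T)$ and $T^n=0$ on $D(T)$. A densely defined $T$ is symmetric if $T\subset T^*$ (i.e. $D(T)\subset D(T^* )$ and $T^*=T$ on $D(T)$). A densely defined $T$ is hyponormal if $D(T)\subset D(T^* )$ and $\|T^*x\|\leq\|Tx\|$ for all $x\in D(T)$. $B(H)$ is the algebra of everywhere defined bounded operators on $H$. *)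

(* Defs.v *)
From HB Require Import structures.
From mathcomp Require Import all_boot all_order all_algebra.
From mathcomp Require Import complex.
From mathcomp Require Import reals.
Set Implicit Arguments. Unset Strict Implicit. Unset Printing Implicit Defensive.
Import Order.TTheory GRing.Theory Num.Theory.
Local Open Scope ring_scope.

Record hilbert (R : realType) := Hilbert {
  hcarrier :> lmodType R[i];
  inner : hcarrier -> hcarrier -> R[i];
  inner_linear : forall (a : R[i]) (x y z : hcarrier),
      inner (a *: x + y) z = a * inner x z + inner y z;
  inner_conjsym : forall x y : hcarrier, inner y x = conjc (inner x y);
  inner_ge0 : forall x : hcarrier, 0 <= inner x x;
  inner_eq0 : forall x : hcarrier, inner x x = 0 -> x = 0;
  inner_complete : forall u : nat -> hcarrier,
      (forall e : R, 0 < e -> exists N : nat, forall m n : nat,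
          (N <= m)%N -> (N <= n)%N ->
          Num.sqrt (complex.Re (inner (u m - u n) (u m - u n))) < e) ->
      exists l : hcarrier, forall e : R, 0 < e -> exists N : nat, forall n : nat,
          (N <= n)%N -> Num.sqrt (complex.Re (inner (u n - l) (u n - l))) < e
}.

Section Defs.
Context {R : realType} {H : hilbert R}.

Definition hnorm (x : H) : R := Num.sqrt (complex.Re (inner x x)).

(* A (possibly unbounded) operator in H: a domain D (a linear subspace)
   and a map T, whose values outside D are irrelevant. *)
Definition lin_op (D : H -> Prop) (T : H -> H) : Prop :=
  D 0 /\
  (forall (a : R[i]) (x y : H), D x -> D y ->
     D (a *: x + y) /\ T (a *: x + y) = a *: T x + T y).

Definition densely_defined (D : H -> Prop) : Prop :=
  forall (x : H) (e : R), 0 < e -> exists y, D y /\ hnorm (x - y) < e.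

Definition cvg_to (u : nat -> H) (l : H) : Prop :=
  forall e : R, 0 < e -> exists N : nat, forall n : nat,
    (N <= n)%N -> hnorm (u n - l) < e.

Definition closed_op (D : H -> Prop) (T : H -> H) : Prop :=
  forall (u : nat -> H) (x y : H), (forall k, D (u k)) ->
    cvg_to u x -> cvg_to (fun k => T (u k)) y -> D x /\ T x = y.

Definition adj_at (D : H -> Prop) (T : H -> H) (y z : H) : Prop :=
  forall x, D x -> inner (T x) y = inner x z.

Definition adj_dom (D : H -> Prop) (T : H -> H) (y : H) : Prop :=
  exists z, adj_at D T y z.

Fixpoint pow_dom (D : H -> Prop) (T : H -> H) (k : nat) : H -> Prop :=
  match k with
  | 0 => fun _ => True
  | k'.+1 => fun x => pow_dom D T k' x /\ D (iter k' T x)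
  end.

Definition nilpotent_op (D : H -> Prop) (T : H -> H) : Prop :=
  exists n : nat, (0 < n)%N /\
    (forall k, (1 <= k <= n)%N -> forall x, pow_dom D T k x <-> D x) /\
    (forall x, D x -> iter n T x = 0).

Definition symmetric_op (D : H -> Prop) (T : H -> H) : Prop :=
  forall y, D y -> adj_at D T y (T y).

Definition hyponormal_op (D : H -> Prop) (T : H -> H) : Prop :=
  forall y, D y -> exists z, adj_at D T y z /\ hnorm z <= hnorm (T y).

End Defs.

(* Main.v *)
Require Import Defs.
From HB Require Import structures.
From mathcomp Require Import all_boot all_order all_algebra.
From mathcomp Require Import complex.
From mathcomp Require Import reals.
From mathcomp Require Import classical_sets.
From mathcomp Require Import ring lra.
From Stdlib Require Import ClassicalEpsilon Classical.
Import Order.TTheory GRing.Theory Num.Theory.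
Local Open Scope ring_scope.
Local Open Scope complex_scope.
Set Implicit Arguments. Unset Strict Implicit. Unset Printing Implicit Defensive.

Section Basics.
Variables (R : realType) (H : hilbert R).
Implicit Types (x y z : H).

Lemma ipDl x y z : inner (x + y) z = inner x z + inner y z.
Proof. by have := inner_linear 1 x y z; rewrite scale1r mul1r. Qed.
Lemma ipZl (a : R[i]) x z : inner (a *: x) z = a * inner x z.
Proof.
have h0 : inner (0 : H) z = 0.
  have := ipDl 0 0 z; rewrite addr0 => /eqP; rewrite -subr_eq0 opprD addrA subrr add0r oppr_eq0.
  by move/eqP.
by have := inner_linear a x 0 z; rewrite addr0 h0 addr0.
Qed.
Lemma ip0l z : inner (0 : H) z = 0.
Proof. by rewrite -(scale0r (0 : H)) ipZl mul0r. Qed.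
Lemma ipNl x z : inner (- x) z = - inner x z.
Proof. by rewrite -scaleN1r ipZl mulN1r. Qed.
Lemma ipBl x y z : inner (x - y) z = inner x z - inner y z.
Proof. by rewrite ipDl ipNl. Qed.
Lemma conjD (a b : R[i]) : conjc (a + b) = conjc a + conjc b.
Proof. by case: a => a1 a2; case: b => b1 b2 /=; rewrite opprD. Qed.
Lemma conjM (a b : R[i]) : conjc (a * b) = conjc a * conjc b.
Proof. by case: a => a1 a2; case: b => b1 b2 /=; congr (_ +i* _); ring. Qed.
Lemma ipDr x y z : inner z (x + y) = inner z x + inner z y.
Proof. by rewrite (inner_conjsym (x + y) z) ipDl conjD -(inner_conjsym x z) -(inner_conjsym y z). Qed.
Lemma ipZr (a : R[i]) x z : inner z (a *: x) = conjc a * inner z x.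
Proof. by rewrite (inner_conjsym (a *: x) z) ipZl conjM -(inner_conjsym x z). Qed.
Lemma conjN1 : conjc (-1 : R[i]) = -1.
Proof. by rewrite /= oppr0. Qed.
Lemma ipNr x z : inner z (- x) = - inner z x.
Proof. by rewrite -scaleN1r ipZr conjN1 mulN1r. Qed.
Lemma ipBr x y z : inner z (x - y) = inner z x - inner z y.
Proof. by rewrite ipDr ipNr. Qed.
Lemma ip0r z : inner z (0 : H) = 0.
Proof. by rewrite (inner_conjsym 0 z) ip0l conjc0. Qed.

Lemma Re_sym x y : complex.Re (inner x y) = complex.Re (inner y x).
Proof. by rewrite (inner_conjsym x y); case: (inner x y) => a b. Qed.
Lemma ReM_real (t : R) (c : R[i]) : complex.Re (t%:C * c) = t * complex.Re c.
Proof. by case: c => a b /=; rewrite mul0r subr0. Qed.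
Lemma ReZl (t : R) x y : complex.Re (inner (t%:C *: x) y) = t * complex.Re (inner x y).
Proof. by rewrite ipZl ReM_real. Qed.
Lemma ReZr (t : R) x y : complex.Re (inner y (t%:C *: x)) = t * complex.Re (inner y x).
Proof. by rewrite ipZr conjc_real ReM_real. Qed.
Lemma ReCD (a b : R[i]) : complex.Re (a + b) = complex.Re a + complex.Re b.
Proof. by case: a => a1 a2; case: b. Qed.
Lemma ReCN (a : R[i]) : complex.Re (- a) = - complex.Re a.
Proof. by case: a. Qed.
Lemma ReDl x y z : complex.Re (inner (x + y) z) = complex.Re (inner x z) + complex.Re (inner y z).
Proof. by rewrite ipDl ReCD. Qed.
Lemma ReDr x y z : complex.Re (inner z (x + y)) = complex.Re (inner z x) + complex.Re (inner z y).
Proof. by rewrite ipDr ReCD. Qed.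
Lemma ReNl x z : complex.Re (inner (- x) z) = - complex.Re (inner x z).
Proof. by rewrite ipNl ReCN. Qed.
Lemma ReNr x z : complex.Re (inner z (- x)) = - complex.Re (inner z x).
Proof. by rewrite ipNr ReCN. Qed.

Lemma Re_ge0 x : 0 <= complex.Re (inner x x).
Proof. by have := inner_ge0 x; rewrite lecE => /andP[]. Qed.
Lemma Im_ip x : complex.Im (inner x x) = 0.
Proof. by have := inner_ge0 x; rewrite lecE => /andP[/eqP ->]. Qed.

Lemma hnorm_ge0 x : 0 <= hnorm x.
Proof. exact: sqrtr_ge0. Qed.
Lemma hnorm_sq x : hnorm x ^+ 2 = complex.Re (inner x x).
Proof. by rewrite /hnorm sqr_sqrtr // Re_ge0. Qed.
Lemma hnorm_eq0 x : hnorm x = 0 -> x = 0.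
Proof.
move=> h; apply: inner_eq0.
have : complex.Re (inner x x) = 0 by rewrite -hnorm_sq h expr0n.
have := Im_ip x; case: (inner x x) => a b /= -> -> //.
Qed.
Lemma hnorm0 : hnorm (0 : H) = 0.
Proof. by rewrite /hnorm ip0l /= sqrtr0. Qed.

Lemma Re_expand (s t : R) x y :
  complex.Re (inner (s%:C *: x + t%:C *: y) (s%:C *: x + t%:C *: y)) =
  s ^+ 2 * complex.Re (inner x x) + 2 * s * t * complex.Re (inner x y) + t ^+ 2 * complex.Re (inner y y).
Proof.
rewrite !ReDl !ReDr !ReZl !ReZr (Re_sym y x); ring.
Qed.

Lemma CS x y : complex.Re (inner x y) <= hnorm x * hnorm y.
Proof.
have := Re_ge0 ((hnorm y)%:C *: x + (- hnorm x)%:C *: y).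
rewrite Re_expand -!hnorm_sq => h.
have ha := hnorm_ge0 x; have hb := hnorm_ge0 y.
have [hp|] := ltrP 0 (hnorm x * hnorm y).
  nra.
move=> hle; have /eqP : hnorm x * hnorm y = 0 by apply/le_anti; rewrite hle mulr_ge0.
rewrite mulf_eq0.
by case/orP => /eqP/hnorm_eq0 ->; rewrite ?ip0l ?ip0r /= hnorm0 ?mul0r ?mulr0.
Qed.

Lemma hnorm_triangle x y : hnorm (x + y) <= hnorm x + hnorm y.
Proof.
have h := Re_expand 1 1 x y; rewrite !scale1r in h.
have hc := CS x y.
have ha := hnorm_ge0 x; have hb := hnorm_ge0 y; have hab := hnorm_ge0 (x + y).
have : hnorm (x + y) ^+ 2 <= (hnorm x + hnorm y) ^+ 2.
  rewrite hnorm_sq h -!hnorm_sq; nra.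
nra.
Qed.

Lemma hnorm_opp x : hnorm (- x) = hnorm x.
Proof. by rewrite /hnorm ipNl ipNr opprK. Qed.

Lemma hnorm_scale (t : R) x : hnorm (t%:C *: x) = `|t| * hnorm x.
Proof.
rewrite /hnorm ipZl ipZr conjc_real mulrA -rmorphM ReM_real sqrtrM ?sqr_ge0 //.
by rewrite -expr2 sqrtr_sqr.
Qed.

Lemma hnormB_sym x y : hnorm (x - y) = hnorm (y - x).
Proof. by rewrite -hnorm_opp opprB. Qed.

End Basics.

Section Op.
Variables (R : realType) (H : hilbert R) (D : H -> Prop) (T : H -> H).
Hypothesis hlin : lin_op D T.
Implicit Types (x y z w : H).

Lemma D0 : D 0. Proof. by case: hlin. Qed.
Lemma DD x y : D x -> D y -> D (x + y).
Proof. by move=> hx hy; have [] := hlin.2 1 x y hx hy; rewrite scale1r. Qed.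
Lemma TD x y : D x -> D y -> T (x + y) = T x + T y.
Proof. by move=> hx hy; have [] := hlin.2 1 x y hx hy; rewrite !scale1r. Qed.
Lemma T0 : T 0 = 0.
Proof.
have := TD D0 D0; rewrite addr0 => /eqP; rewrite -subr_eq0 opprD addrA subrr add0r oppr_eq0.
by move/eqP.
Qed.
Lemma DZ (a : R[i]) x : D x -> D (a *: x).
Proof. by move=> hx; have [] := hlin.2 a x 0 hx D0; rewrite addr0. Qed.
Lemma TZ (a : R[i]) x : D x -> T (a *: x) = a *: T x.
Proof. by move=> hx; have [] := hlin.2 a x 0 hx D0; rewrite !addr0 T0 addr0. Qed.
Lemma DN x : D x -> D (- x).
Proof. by move=> hx; rewrite -scaleN1r; apply: DZ. Qed.
Lemma TN x : D x -> T (- x) = - T x.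
Proof. by move=> hx; rewrite -scaleN1r TZ // scaleN1r. Qed.
Lemma DB x y : D x -> D y -> D (x - y).
Proof. by move=> hx hy; apply: DD => //; apply: DN. Qed.
Lemma TB x y : D x -> D y -> T (x - y) = T x - T y.
Proof. by move=> hx hy; rewrite TD ?TN //; apply: DN. Qed.

Definition g x := hnorm x + hnorm (T x).

Lemma g_ge0 x : 0 <= g x.
Proof. by rewrite /g addr_ge0 // hnorm_ge0. Qed.
Lemma g_triangle x y : D x -> D y -> g (x + y) <= g x + g y.
Proof.
move=> hx hy; rewrite /g TD //.
have := hnorm_triangle x y; have := hnorm_triangle (T x) (T y); lra.
Qed.
Lemma gN x : D x -> g (- x) = g x.
Proof. by move=> hx; rewrite /g TN // !hnorm_opp. Qed.
Lemma gB_sym x y : D x -> D y -> g (x - y) = g (y - x).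
Proof. by move=> hx hy; rewrite -gN ?opprB //; apply: DB. Qed.
Lemma gZ (t : R) x : D x -> g (t%:C *: x) = `|t| * g x.
Proof. by move=> hx; rewrite /g TZ // !hnorm_scale mulrDr. Qed.
Lemma g0 : g 0 = 0.
Proof. by rewrite /g T0 hnorm0 addr0. Qed.
Lemma hnorm_le_g x : hnorm x <= g x.
Proof. by rewrite /g lerDl hnorm_ge0. Qed.
Lemma hnormT_le_g x : hnorm (T x) <= g x.
Proof. by rewrite /g lerDr hnorm_ge0. Qed.


Hypothesis hclosed : closed_op D T.

Lemma graph_complete (u : nat -> H) : (forall k, D (u k)) ->
  (forall e : R, 0 < e -> exists N, forall m n, (N <= m)%N -> (N <= n)%N -> g (u m - u n) < e) ->
  exists l, D l /\ forall e : R, 0 < e -> exists N, forall n, (N <= n)%N -> g (u n - l) < e.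
Proof.
move=> hu hc.
have [l hl] : exists l, cvg_to u l.
  apply: inner_complete => e he; have [N hN] := hc e he; exists N => m n hm hn.
  exact: le_lt_trans (hnorm_le_g _) (hN m n hm hn).
have [l' hl'] : exists l', cvg_to (fun k => T (u k)) l'.
  apply: inner_complete => e he; have [N hN] := hc e he; exists N => m n hm hn.
  rewrite -TB //; exact: le_lt_trans (hnormT_le_g _) (hN m n hm hn).
have [Dl Tl] := hclosed hu hl hl'.
exists l; split => // e he.
have he2 : 0 < e / 2 by rewrite divr_gt0.
have [N1 h1] := hl (e/2) he2; have [N2 h2] := hl' (e/2) he2.
exists (maxn N1 N2) => n hn.
have := h1 n (leq_trans (leq_maxl _ _) hn); have := h2 n (leq_trans (leq_maxr _ _) hn).
rewrite /g TB // Tl; lra.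
Qed.


Definition Nset w : set R := fun r =>
  exists xi, D xi /\ g xi <= 1 /\ r = complex.Re (inner (T w) xi).
Definition Nf w := sup (Nset w).

Lemma Nset0 w : Nset w 0.
Proof. by exists 0; split; [exact: D0|split; [rewrite g0|rewrite ip0r]]. Qed.

Lemma Nset_sup w : has_sup (Nset w).
Proof.
split; first by exists 0; apply: Nset0.
exists (hnorm (T w)) => r [xi [hxi [hg ->]]].
have := CS (T w) xi; have := hnorm_le_g xi; have := hnorm_ge0 (T w); have := hnorm_ge0 xi.
nra.
Qed.

Lemma Nf_ge0 w : 0 <= Nf w.
Proof. exact: sup_upper_bound (Nset_sup w) _ (Nset0 w). Qed.

Lemma Nf_bound w xi : D xi -> complex.Re (inner (T w) xi) <= Nf w * g xi.
Proof.
move=> hxi; have [g0'|gp] := eqVneq (g xi) 0.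
  have : hnorm xi = 0.
    by apply/le_anti; rewrite hnorm_ge0 andbT -g0' hnorm_le_g.
  by move/hnorm_eq0 => ->; rewrite ip0r g0 mulr0.
have gpos : 0 < g xi by rewrite lt_def gp g_ge0.
set c := (g xi)^-1.
have hc : 0 < c by rewrite invr_gt0.
have hin : Nset w (complex.Re (inner (T w) (c%:C *: xi))).
  exists (c%:C *: xi); split; first exact: DZ.
  by split => //; rewrite gZ // gtr0_norm // mulVf.
have := sup_upper_bound (Nset_sup w) hin; rewrite ReZr -/(Nf w) => h.
have e : complex.Re (inner (T w) xi) = g xi * (c * complex.Re (inner (T w) xi)).
  by rewrite mulrA mulfV // mul1r.
rewrite e mulrC; apply: ler_wpM2r => //; exact: g_ge0.
Qed.

Lemma Nf_abs w xi : D xi -> `|complex.Re (inner (T w) xi)| <= Nf w * g xi.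
Proof.
move=> hxi; rewrite ler_norml Nf_bound // andbT.
have := Nf_bound w (DN hxi); rewrite ReNr gN //; lra.
Qed.

Lemma Nf_adh w : 0 < Nf w ->
  exists xi, D xi /\ g xi <= 1 /\ 2/3 * Nf w < complex.Re (inner (T w) xi).
Proof.
move=> hN; have he : 0 < Nf w / 3 by rewrite divr_gt0.
have [r [xi [hxi [hg ->]]] hr] := sup_adherent he (Nset_sup w).
exists xi; split => //; split => //; rewrite -/(Nf w) in hr; lra.
Qed.

Lemma sokal_step w x r : D x -> 0 < r ->
  exists y, D y /\ g (y - x) <= r /\ 2/3 * r * Nf w <= `|complex.Re (inner (T w) y)|.
Proof.
move=> hx hr; have [hN0|hNp] := lerP (Nf w) 0.
  exists x; split => //; split; first by rewrite subrr g0 ltW.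
  have : Nf w = 0 by apply/le_anti; rewrite hN0 Nf_ge0.
  by move=> ->; rewrite mulr0 normr_ge0.
have [xi [hxi [hg hre]]] := Nf_adh hNp.
set eta := r%:C *: xi.
have heta : D eta by apply: DZ.
have hge : g eta <= r by rewrite /eta gZ // gtr0_norm //; nra.
have hre' : 2/3 * r * Nf w < complex.Re (inner (T w) eta) by rewrite /eta ReZr; nra.
have hplus : complex.Re (inner (T w) (x + eta)) =
   complex.Re (inner (T w) x) + complex.Re (inner (T w) eta) by rewrite ReDr.
have hminus : complex.Re (inner (T w) (x - eta)) =
   complex.Re (inner (T w) x) - complex.Re (inner (T w) eta) by rewrite ReDr ReNr.
have [hp|hm] := lerP (complex.Re (inner (T w) eta)) (`|complex.Re (inner (T w) (x + eta))|).
  exists (x + eta); split; first exact: DD.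
  split; first by rewrite addrC addKr.
  lra.
exists (x - eta); split; first exact: DB.
split; first by rewrite addrC addKr gN.
move: hm; rewrite hminus hplus => hm.
set a := complex.Re (inner (T w) x) in hm *; set b := complex.Re (inner (T w) eta) in hm hre' *.
rewrite ler_normr; apply/orP; right.
have := ler_norm (a+b).
lra.
Qed.


Definition rr (k : nat) : R := ((3 : R) ^+ k)^-1.
Lemma three_neq0 : (3 : R) != 0.
Proof. have h3 : (0:R) < 3 by lra. by rewrite gt_eqF. Qed.
Lemma rr_gt0 k : 0 < rr k.
Proof. by rewrite invr_gt0 exprn_gt0. Qed.
Lemma rrS k : rr k = 3 * rr k.+1.
Proof.
rewrite /rr exprS invfM mulrA mulfV ?mul1r //.
have h3 : (0:R) < 3 by lra.
by rewrite gt_eqF.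
Qed.
Lemma rrX k : rr k * 3 ^+ k = 1.
Proof. by rewrite /rr mulVf // expf_neq0 // three_neq0. Qed.
Lemma rr_le n m : (n <= m)%N -> rr m <= rr n.
Proof.
move/subnK => <-; elim: (m - n)%N => [|k ih]; first by rewrite add0n.
rewrite addSn; apply: le_trans ih; rewrite (rrS (k + n)); have := rr_gt0 (k + n).+1; lra.
Qed.
Lemma rr_small (e : R) : 0 < e -> exists N, rr N < e.
Proof.
move=> he; have h0 : 0 <= e^-1 by rewrite invr_ge0 ltW.
have := archi_boundP h0; set N := Num.Def.archi_bound _ => hN.
exists N.
have hN3 : (N%:R : R) <= 3 ^+ N.
  rewrite -natrX ler_nat; apply: ltnW; exact: ltn_expl.
have h3 : e^-1 < 3 ^+ N by apply: lt_le_trans hN hN3.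
rewrite /rr -(invrK e) ltf_pV2 ?posrE ?exprn_gt0 ?invr_gt0 //.
Qed.

Lemma ubp :
  (forall x, D x -> exists c : R, forall w, D w ->
      `|complex.Re (inner (T w) x)| <= hnorm w * c) ->
  exists M : R, forall w, D w -> Nf w <= M * hnorm w.
Proof.
move=> hpt; apply: NNPP => hno.
have hw : forall n : nat, exists w, D w /\ (6 * (n.+1)%:R * 3 ^+ n.+1) * hnorm w < Nf w.
  move=> n; apply: NNPP => hn; apply: hno; exists (6 * (n.+1)%:R * 3 ^+ n.+1) => w hw.
  rewrite leNgt; apply/negP => hlt; apply: hn; exists w; split => //.
pose W n := proj1_sig (constructive_indefinite_description _ (hw n)).
have hW n : D (W n) /\ (6 * (n.+1)%:R * 3 ^+ n.+1) * hnorm (W n) < Nf (W n).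
  exact: proj2_sig (constructive_indefinite_description _ (hw n)).
have hst : forall n x, exists y, D x -> D y /\ g (y - x) <= rr n.+1 /\
    2/3 * rr n.+1 * Nf (W n) <= `|complex.Re (inner (T (W n)) y)|.
  move=> n x; case: (classic (D x)) => hx.
    have [y hy] := sokal_step (W n) hx (rr_gt0 n.+1); by exists y.
  by exists x.
pose S n x := proj1_sig (constructive_indefinite_description _ (hst n x)).
have hS n x : D x -> D (S n x) /\ g (S n x - x) <= rr n.+1 /\
    2/3 * rr n.+1 * Nf (W n) <= `|complex.Re (inner (T (W n)) (S n x))|.
  exact: proj2_sig (constructive_indefinite_description _ (hst n x)).
pose xs := fix xs n := match n with 0 => 0 | n'.+1 => S n' (xs n') end.
have hD : forall n, D (xs n).
  elim => [|n ih]; first exact: D0.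
  exact: (hS n _ ih).1.
have hC : forall n k, g (xs (n + k)%N - xs n) <= (rr n - rr (n + k)%N) / 2.
  move=> n; elim => [|k ih]; first by rewrite addn0 subrr g0 subrr mul0r.
  rewrite addnS.
  have e : xs (n + k).+1 - xs n = (xs (n + k).+1 - xs (n + k)%N) + (xs (n + k)%N - xs n).
    by rewrite addrA subrK.
  rewrite e; apply: le_trans (g_triangle _ _) _; first exact: DB.
    exact: DB.
  have := (hS (n + k)%N _ (hD (n + k)%N)).2.1; rewrite /= => h1.
  have := rrS (n + k); lra.
have hC2 : forall n m, (n <= m)%N -> g (xs m - xs n) <= rr n / 2.
  move=> n m /subnKC <-; apply: le_trans (hC n (m - n)%N) _.
  have := rr_gt0 (n + (m - n))%N; lra.
have [l [Dl hl]] : exists l, D l /\ forall e : R, 0 < e ->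
    exists N, forall n, (N <= n)%N -> g (xs n - l) < e.
  apply: graph_complete => // e he.
  have [N hN] := rr_small he.
  exists N => m n hm hn.
  have [hmn|hnm] := leqP m n.
    rewrite gB_sym //; apply: le_lt_trans (hC2 _ _ hmn) _.
    have := rr_le hm; have := rr_gt0 m; lra.
  apply: le_lt_trans (hC2 _ _ (ltnW hnm)) _.
  have := rr_le hn; have := rr_gt0 n; lra.
have hlim : forall n, g (l - xs n) <= rr n / 2.
  move=> n; rewrite leNgt; apply/negP => hlt.
  have hpos : 0 < g (l - xs n) - rr n / 2 by rewrite subr_gt0.
  have [N hN] := hl _ hpos.
  set k := maxn N n.
  have h1 := hN k (leq_maxl _ _).
  have h2 := hC2 n k (leq_maxr _ _).
  have e : l - xs n = (l - xs k) + (xs k - xs n) by rewrite addrA subrK.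
  have h3 := g_triangle (DB Dl (hD k)) (DB (hD k) (hD n)).
  rewrite -e in h3.
  rewrite (gB_sym (hD k) Dl) in h1.
  lra.
have [c hc] := hpt l Dl.
have key : forall n, (n.+1)%:R < c.
  move=> n.
  have [hWD hWN] := hW n.
  have [_ [_ h1]] := hS n _ (hD n).
  rewrite -/(xs n.+1) in h1.
  set a := complex.Re (inner (T (W n)) (xs n.+1)) in h1.
  have e : l = xs n.+1 + (l - xs n.+1) by rewrite addrC subrK.
  have h2 := Nf_abs (W n) (DB Dl (hD n.+1)).
  have h3 := hlim n.+1.
  have h4 : complex.Re (inner (T (W n)) l) = a + complex.Re (inner (T (W n)) (l - xs n.+1)).
    by rewrite {1}e (ReDr (xs n.+1) (l - xs n.+1)).
  set b := complex.Re (inner (T (W n)) (l - xs n.+1)) in h2 h4.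
  have h5 := hc _ hWD; rewrite h4 in h5.
  have hN0 := Nf_ge0 (W n).
  have hr := rr_gt0 n.+1.
  have h6 : `|b| <= Nf (W n) * (rr n.+1 / 2).
    apply: le_trans h2 _; apply: ler_wpM2l => //.
  have h7 : `|a| <= `|a + b| + `|b|.
    by have := ler_normB (a + b) b; rewrite addrK.
  have h8 : rr n.+1 * Nf (W n) / 6 <= hnorm (W n) * c by nra.
  have hX := rrX n.+1.
  set q := 3 ^+ n.+1 in hWN hX.
  have hq : 0 < q by rewrite exprn_gt0.
  have hh := hnorm_ge0 (W n).
  have h9 : rr n.+1 * (6 * (n.+1)%:R * q * hnorm (W n)) < rr n.+1 * Nf (W n).
    by rewrite ltr_pM2l.
  have h10 : rr n.+1 * (6 * (n.+1)%:R * q * hnorm (W n)) = 6 * (n.+1)%:R * hnorm (W n).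
    have -> : rr n.+1 * (6 * (n.+1)%:R * q * hnorm (W n)) = (rr n.+1 * q) * (6 * (n.+1)%:R * hnorm (W n)) by ring.
    by rewrite hX mul1r.
  rewrite h10 in h9.
  nra.
have hc0 : 0 <= c by have := key 0%N; lra.
have := archi_boundP hc0; set N := Num.Def.archi_bound _ => hN.
have := key N; rewrite -natr1; lra.
Qed.


Lemma form_bound : (forall y, D y -> adj_dom D T y) ->
  exists M : R, 0 <= M /\ forall w x, D w -> D x ->
    complex.Re (inner (T w) x) <= M * hnorm w * g x.
Proof.
move=> hadj.
have [M hM] : exists M : R, forall w, D w -> Nf w <= M * hnorm w.
  apply: ubp => x hx; have [z hz] := hadj x hx.
  exists (hnorm z) => w hw; rewrite hz // ler_norml CS andbT.
  have := CS (- w) z; rewrite ReNl hnorm_opp; lra.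
exists (Num.max M 0); split; first by rewrite le_max lexx orbT.
move=> w x hw hx; apply: le_trans (Nf_bound w hx) _.
apply: ler_wpM2r; first exact: g_ge0.
apply: le_trans (hM w hw) _; apply: ler_wpM2r; first exact: hnorm_ge0.
by rewrite le_max lexx.
Qed.

Lemma bounded_on_D : nilpotent_op D T -> forall M : R, 0 <= M ->
  (forall w x, D w -> D x -> complex.Re (inner (T w) x) <= M * hnorm w * g x) ->
  exists C : R, forall x, D x -> hnorm (T x) <= C * hnorm x.
Proof.
move=> [n [hn [hdom hz]]] M hM0 hb.
pose Cf := fix Cf j := match j with 0 => 0 | j'.+1 => M * (1 + Cf j') end.
have Cf0 : forall j, 0 <= Cf j.
  elim => [|j ih] /=; first exact: lexx.
  by apply: mulr_ge0 => //; apply: addr_ge0.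
exists (Cf n.-1) => x hx.
have hDk : forall k, (k <= n)%N -> D (iter k T x).
  move=> k; rewrite leq_eqVlt => /orP[/eqP ->|hk]; first by rewrite hz //; exact: D0.
  have hk1 : (1 <= k.+1 <= n)%N by rewrite hk.
  by case: ((hdom k.+1 hk1 x).2 hx).
pose a k := hnorm (iter k T x).
have a0 : forall k, 0 <= a k by move=> k; exact: hnorm_ge0.
have ineq : forall k, (k.+1 < n)%N -> a k.+1 ^+ 2 <= M * a k * (a k.+1 + a k.+2).
  move=> k hk; rewrite /a hnorm_sq iterS.
  have := hb (iter k T x) (iter k.+1 T x) (hDk k _) (hDk k.+1 _).
  rewrite /g -!iterS; apply.
    by apply: ltnW; apply: ltnW.
  exact: ltnW.
have claim : forall j k, (k.+1 + j)%N = n -> a k.+1 <= Cf j * a k.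
  elim => [|j ih] k hkj.
    by rewrite addn0 in hkj; rewrite /= mul0r /a hkj hz // hnorm0.
  have hk1 : ((k.+1).+1 + j)%N = n by rewrite -hkj addSnnS.
  have h1 := ih k.+1 hk1.
  have hk2 : (k.+1 < n)%N by rewrite -hk1 addSn ltnS leq_addr.
  have h2 := ineq k hk2.
  have hMa : 0 <= M * a k by apply: mulr_ge0.
  have h3 : M * a k * (a k.+1 + a k.+2) <= M * a k * (a k.+1 + Cf j * a k.+1).
    by apply: ler_wpM2l => //; rewrite lerD2l.
  have h4 : a k.+1 * a k.+1 <= (M * (1 + Cf j) * a k) * a k.+1.
    rewrite -expr2; apply: le_trans h2 _; apply: le_trans h3 _.
    by rewrite le_eqVlt; apply/orP; left; apply/eqP; ring.
  rewrite /=.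
  have [hz0|hp] := eqVneq (a k.+1) 0.
    rewrite hz0; apply: mulr_ge0 => //; apply: mulr_ge0 => //; apply: addr_ge0 => //.
  have hpos : 0 < a k.+1 by rewrite lt_def hp a0.
  by rewrite -(ler_pM2r hpos).
by have := claim n.-1 0%N; rewrite add1n prednK // => /(_ erefl).
Qed.


Lemma extend_dom : densely_defined D -> forall C : R,
  (forall x, D x -> hnorm (T x) <= C * hnorm x) -> forall x, D x.
Proof.
move=> hd C hC x.
have hu : forall k, exists u, D u /\ hnorm (x - u) < rr k.
  by move=> k; apply: hd; apply: rr_gt0.
pose u k := proj1_sig (constructive_indefinite_description _ (hu k)).
have hu' k : D (u k) /\ hnorm (x - u k) < rr k.
  exact: proj2_sig (constructive_indefinite_description _ (hu k)).
have hcv : cvg_to u x.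
  move=> e he; have [N hN] := rr_small he; exists N => n hn.
  rewrite hnormB_sym; apply: lt_trans (hu' n).2 _; apply: le_lt_trans (rr_le hn) hN.
have [y hy] : exists y, cvg_to (fun k => T (u k)) y.
  apply: inner_complete => e he.
  have hC1 : 0 < `|C| + 1 by apply: ltr_wpDl => //; rewrite normr_ge0.
  have he' : 0 < e / (2 * (`|C| + 1)) by rewrite divr_gt0 // mulr_gt0.
  have [N hN] := rr_small he'.
  exists N => m n hm hn.
  have hum := (hu' m); have hun := (hu' n).
  rewrite -TB; [|exact: hum.1|exact: hun.1].
  have hD' : D (u m - u n) by apply: DB; [exact: hum.1|exact: hun.1].
  apply: le_lt_trans (hC _ hD') _.
  have e1 : u m - u n = (u m - x) + (x - u n) by rewrite addrA subrK.
  have ht := hnorm_triangle (u m - x) (x - u n).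
  rewrite -e1 (hnormB_sym (u m) x) in ht.
  have h1 := rr_le hm; have h2 := rr_le hn.
  have hh : hnorm (u m - u n) < 2 * rr N.
    move: hum.2 hun.2 => a b; lra.
  have hh0 := hnorm_ge0 (u m - u n).
  have hCle : C * hnorm (u m - u n) <= (`|C| + 1) * hnorm (u m - u n).
    apply: ler_wpM2r => //; have := ler_norm C; lra.
  apply: le_lt_trans hCle _.
  have : (`|C| + 1) * hnorm (u m - u n) < (`|C| + 1) * (2 * rr N) by rewrite ltr_pM2l.
  move=> h; apply: lt_le_trans h _.
  have : rr N * (2 * (`|C| + 1)) <= e.
    by rewrite -ler_pdivlMr ?mulr_gt0 // ltW.
  lra.
have hDu : forall k, D (u k) by move=> k; exact: (hu' k).1.
by have [] := hclosed hDu hcv hy.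
Qed.

End Op.

Unset Implicit Arguments.
Local Close Scope complex_scope.

Theorem proposition2p3 (R : realType) (H : hilbert R) (D : H -> Prop) (T : H -> H) :
  lin_op D T -> densely_defined D -> closed_op D T -> nilpotent_op D T ->
  ((forall y, D y -> adj_dom D T y) ->
     (forall x, D x) /\ (exists M : R, forall x, hnorm (T x) <= M * hnorm x))
  /\ (symmetric_op D T \/ hyponormal_op D T -> forall x, D x /\ T x = 0).
Proof.
move=> hlin hd hcl hnil.
have part1 : (forall y, D y -> adj_dom D T y) ->
     (forall x, D x) /\ (exists M : R, forall x, hnorm (T x) <= M * hnorm x).
  move=> hadj.
  have [M [hM0 hM]] := form_bound hlin hcl hadj.
  have [C hC] := bounded_on_D hlin hnil hM0 hM.
  have hall := extend_dom hlin hcl hd hC.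
  split => //; exists C => x; exact: hC x (hall x).
split => // hsh.
have hadj : forall y, D y -> adj_dom D T y.
  case: hsh => [hs|hh] y hy; first by exists (T y); exact: hs.
  by have [z [hz _]] := hh y hy; exists z.
have [hall _] := part1 hadj.
have P : forall v, T (T v) = 0 -> T v = 0.
  move=> v hv; apply: inner_eq0.
  case: hsh => [hs|hh].
    by rewrite (hs (T v) (hall _) v (hall v)) hv ip0r.
  have [z [hz hzn]] := hh (T v) (hall _).
  have z0 : z = 0.
    apply: hnorm_eq0; apply/le_anti; rewrite hnorm_ge0 andbT.
    by move: hzn; rewrite hv hnorm0.
  by rewrite (hz v (hall v)) z0 ip0r.
have [n [hn [_ hz]]] := hnil.
have down : forall m, (forall x, iter m.+1 T x = 0) -> forall x, T x = 0.
  elim => [|m ih] hm x; first exact: hm x.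
  apply: ih => y; rewrite iterS; apply: P.
  by have := hm y; rewrite !iterS.
move=> x; split => //.
apply: (down n.-1) => y; rewrite prednK //; exact: hz y (hall y).
Qed.
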